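(* Let $k$ be an algebraically closed field and let $A$ be a connected basic finite dimensional $k$-algebra which does not have a non-trivial grading. Then the (Gabriel) quiver of $A$ has exactly one vertex.
   Context: A grading on $A$ is a decomposition $A=\bigoplus_{i\in\mathbb{Z}}A_i$ into subspaces with $A_iA_j\subseteq A_{i+j}$ for all $i,j\in\mathbb{Z}$. The trivial grading is $A_0=A$; a grading is non-trivial if $A_i\neq 0$ for some $i\neq 0$. Here ''$A$ has a non-trivial grading'' means there is a non-trivial grading on an algebra isomorphic to $A$. Connected means $A$ is indecomposable as an algebra. *)

(* Defs.v *)
From HB Require Import structures.
From mathcomp Require Import all_boot all_order all_algebra all_field.
Set Implicit Arguments. Unset Strict Implicit. Unset Printing Implicit Defensive.
Import GRing.Theory.
Local Open Scope ring_scope.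

(* Finite dimensional algebras over a field F are MathComp's [falgType F]
   (unital, associative, finite dimensional, nonzero). *)
Section FinDimAlgebras.
Variables (F : fieldType) (A : falgType F).

(* A Z-grading: A = (+)_{i in Z} A_i with A_i A_j <= A_(i+j).  Since A is
   finite dimensional only finitely many A_i are nonzero; S lists the
   (candidate) nonzero degrees. *)
Definition is_Zgrading (V : int -> {vspace A}) : Prop :=
  exists S : seq int,
    [/\ uniq S,
        (forall i, i \notin S -> V i = 0%VS),
        (\sum_(i <- S) V i)%VS = fullv,
        directv (\sum_(i <- S) V i)
      & (forall (i j : int) (u v : A), u \in V i -> v \in V j -> u * v \in V (i + j))].

Definition nontrivial_grading (V : int -> {vspace A}) : Prop :=
  exists i : int, i != 0 /\ V i != 0%VS.

Definition has_nontrivial_grading : Prop :=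
  exists V, is_Zgrading V /\ nontrivial_grading V.

Definition is_ideal (I : {vspace A}) : Prop :=
  forall a x, x \in I -> (a * x \in I) /\ (x * a \in I).

(* connected = indecomposable as an algebra: A is not the (internal) direct
   product of two nonzero two-sided ideals. *)
Definition connected_alg : Prop :=
  forall I J : {vspace A}, is_ideal I -> is_ideal J ->
    (I + J)%VS = fullv -> (I :&: J)%VS = 0%VS -> I = 0%VS \/ J = 0%VS.

(* Jacobson radical (standard element-wise characterisation). *)
Definition in_rad (x : A) : Prop := forall a : A, (1 - a * x) \is a GRing.unit.

(* basic: A / rad A is isomorphic to k x ... x k (n copies), i.e. there are
   n unital algebra maps phi_i : A -> k such that (phi_1,...,phi_n) : A -> k^n
   is surjective with kernel rad A. *)
Definition basic_alg : Prop :=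
  exists (n : nat) (phi : 'I_n -> A -> F),
    [/\ (forall i (c : F) (a b : A), phi i (c *: a + b) = c * phi i a + phi i b),
        (forall i (a b : A), phi i (a * b) = phi i a * phi i b),
        (forall i, phi i 1 = 1),
        (forall c : 'I_n -> F, exists a : A, forall i, phi i a = c i)
      & (forall a : A, (forall i, phi i a = 0) <-> in_rad a)].

Definition idem (e : A) : Prop := e * e = e.

Definition primitive_idem (e : A) : Prop :=
  idem e /\ e != 0 /\
  forall e1 e2 : A, idem e1 -> idem e2 -> e1 * e2 = 0 -> e2 * e1 = 0 ->
    e = e1 + e2 -> e1 = 0 \/ e2 = 0.

Definition complete_primitive_set (s : seq A) : Prop :=
  [/\ (forall i, (i < size s)%N -> primitive_idem s`_i),
      (forall i j, (i < size s)%N -> (j < size s)%N -> i != j -> s`_i * s`_j = 0)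
    & \sum_(e <- s) e = 1].

(* For a basic algebra A the vertices of its Gabriel quiver Q_A are in
   bijection with the members of a complete set of primitive orthogonal
   idempotents.  "Q_A has exactly n vertices": *)
Definition quiver_num_vertices (n : nat) : Prop :=
  (exists s, complete_primitive_set s /\ size s = n) /\
  (forall s, complete_primitive_set s -> size s = n).

End FinDimAlgebras.

(* Main.v *)
Require Import Defs.
From HB Require Import structures.
From mathcomp Require Import all_boot all_order all_algebra all_field.
Set Implicit Arguments. Unset Strict Implicit. Unset Printing Implicit Defensive.
Import GRing.Theory.
Local Open Scope ring_scope.

Section S.
Variables (k : fieldType) (A : falgType k).
Definition pc (a b : A) : {vspace A} := limg (amull a \o amulr b)%VF.

Lemma memPc (a b x : A) : a * a = a -> b * b = b -> reflect (a * x * b = x) (x \in pc a b).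
Proof.
move=> aa bb; apply: (iffP memv_imgP) => [[u _ ->]|<-].
  rewrite comp_lfunE !lfunE /= !mulrA aa -[_ * b * b]mulrA bb.
  by rewrite -mulrA.
by exists x; rewrite ?memvf // comp_lfunE !lfunE /= mulrA.
Qed.

Lemma mulpc (a b c d x y : A) : a * a = a -> b * b = b -> c * c = c -> d * d = d ->
  x \in pc a b -> y \in pc c d -> x * y \in pc a d.
Proof.
move=> aa bb cc dd /memPc-/(_ aa bb) Hx /memPc-/(_ cc dd) Hy.
apply/memPc => //; rewrite -[x]Hx -[y]Hy !mulrA aa -[_ * d * d]mulrA dd.
by [].
Qed.

Lemma zeropc (a b c d x y : A) : a * a = a -> b * b = b -> c * c = c -> d * d = d ->
  x \in pc a b -> y \in pc c d -> b * c = 0 -> x * y = 0.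
Proof.
move=> aa bb cc dd /memPc-/(_ aa bb) Hx /memPc-/(_ cc dd) Hy bc.
by rewrite -[x]Hx -[y]Hy !mulrA -(mulrA (a * x)) bc mulr0 !mul0r.
Qed.

Lemma inpc (a b x : A) : a * a = a -> b * b = b -> a * x * b \in pc a b.
Proof. by move=> aa bb; apply/memPc; rewrite // !mulrA aa -mulrA bb. Qed.

Lemma pcE (a b c d u : A) : c * c = c -> d * d = d -> u \in pc c d ->
  a * u * b = (a * c) * u * (d * b).
Proof. by move=> cc dd /memPc-/(_ cc dd) Hu; rewrite -{1}Hu !mulrA. Qed.

Variables (e f : A).
Hypotheses (ee : e * e = e) (ff : f * f = f) (ef : e * f = 0) (fe : f * e = 0)
  (efs : e + f = 1).

Lemma decomp x : x = (e * x * e + f * x * e) + (e * x * f + f * x * f).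
Proof.
by rewrite -{1}[x]mulr1 -{1}[x]mul1r -efs mulrDr !mulrDl.
Qed.

Definition B0 := (pc e e + pc f f)%VS.
Definition V (i : int) : {vspace A} :=
  if i == 0 then B0 else if i == 1 then pc e f else if i == -1 then pc f e else 0%VS.

Lemma V0E : V 0 = B0. Proof. by []. Qed.
Lemma V1E : V 1 = pc e f. Proof. by []. Qed.
Lemma VmE : V (-1) = pc f e. Proof. by []. Qed.

Lemma caseV i u : u \in V i ->
  [\/ i = 0 /\ u \in B0, i = 1 /\ u \in pc e f, i = -1 /\ u \in pc f e | u = 0].
Proof.
rewrite /V; case: eqP => [->|_]; first by constructor 1.
case: eqP => [->|_]; first by constructor 2.
case: eqP => [->|_]; first by constructor 3.
by rewrite memv0 => /eqP; constructor 4.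
Qed.


Definition S3 : seq int := [:: 0; 1; -1].

Lemma dir : directv (\sum_(i <- S3) V i).
Proof.
rewrite directvE /= /S3 !big_cons !big_nil addv0 addn0 V0E V1E VmE.
have C1 : (pc e f :&: pc f e = 0)%VS.
  apply/eqP; rewrite -subv0; apply/subvP => x /memv_capP[/memPc-/(_ ee ff) H1 /memPc-/(_ ff ee) H2].
  by rewrite memv0 -H1 -H2 !mulrA ef !mul0r.
have C0 : (B0 :&: (pc e f + pc f e) = 0)%VS.
  apply/eqP; rewrite -subv0; apply/subvP => x /memv_capP[].
  case/memv_addP => u1 Hu1 [u2 Hu2 ->] /memv_addP[v1 Hv1 [v2 Hv2 Euv]].
  have Z1 : e * (u1 + u2) * f = 0.
    by rewrite mulrDr mulrDl (pcE _ _ ee ee Hu1) (pcE _ _ ff ff Hu2) ef !(mulr0, mul0r) addr0.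
  have Z2 : f * (u1 + u2) * e = 0.
    by rewrite mulrDr mulrDl (pcE _ _ ee ee Hu1) (pcE _ _ ff ff Hu2) fe !(mulr0, mul0r) addr0.
  have V1 : v1 = 0.
    rewrite -Z1 Euv mulrDr mulrDl (pcE _ _ ee ff Hv1) (pcE _ _ ff ee Hv2) ?ef ?fe !(mulr0, mul0r) addr0 ee ff.
    by apply/esym/memPc.
  have V2 : v2 = 0.
    rewrite -Z2 Euv mulrDr mulrDl (pcE _ _ ee ff Hv1) (pcE _ _ ff ee Hv2) ?ef ?fe !(mulr0, mul0r) add0r ee ff.
    by apply/esym/memPc.
  by rewrite memv0 Euv V1 V2 addr0.
by rewrite dimv_disjoint_sum // dimv_disjoint_sum.
Qed.

Lemma grV : is_Zgrading V.
Proof.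
exists S3; split => //.
- move=> i; rewrite /S3 !inE !negb_or => /and3P[/negPf H0 /negPf H1 /negPf H2].
  by rewrite /V H0 H1 H2.
- rewrite /S3 !big_cons big_nil addv0 V0E V1E VmE; apply/vspaceP => x.
  rewrite memvf.
  have -> : x = (e*x*e + f*x*f) + (e*x*f + f*x*e).
    by rewrite {1}[x]decomp [e * x * f + _]addrC addrACA [f * x * e + _]addrC.
  by rewrite memv_add ?memv_add ?inpc.
- exact: dir.
move=> i j u v /caseV[[-> Hu]|[-> Hu]|[-> Hu]|->]; last by rewrite mul0r mem0v.
- case/memv_addP: Hu => u1 Hu1 [u2 Hu2 ->].
  move/caseV=> [[-> Hv]|[-> Hv]|[-> Hv]|->]; last by rewrite mulr0 mem0v.
  + case/memv_addP: Hv => v1 Hv1 [v2 Hv2 ->].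
    rewrite addr0 V0E mulrDl !mulrDr (zeropc ee ee ff ff Hu1 Hv2 ef).
    rewrite (zeropc ff ff ee ee Hu2 Hv1 fe) addr0 add0r.
    by rewrite memv_add // (mulpc ee ee ee ee Hu1 Hv1, mulpc ff ff ff ff Hu2 Hv2).
  + rewrite add0r V1E mulrDl (zeropc ff ff ee ff Hu2 Hv fe) addr0.
    exact: (mulpc ee ee ee ff Hu1 Hv).
  + rewrite add0r VmE mulrDl (zeropc ee ee ff ee Hu1 Hv ef) add0r.
    exact: (mulpc ff ff ff ee Hu2 Hv).
- move/caseV=> [[-> Hv]|[-> Hv]|[-> Hv]|->]; last by rewrite mulr0 mem0v.
  + case/memv_addP: Hv => v1 Hv1 [v2 Hv2 ->].
    rewrite addr0 V1E mulrDr (zeropc ee ff ee ee Hu Hv1 fe) add0r.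
    exact: (mulpc ee ff ff ff Hu Hv2).
  + by rewrite (zeropc ee ff ee ff Hu Hv fe) mem0v.
  + rewrite subrr V0E -[u * v]addr0 memv_add ?mem0v //.
    exact: (mulpc ee ff ff ee Hu Hv).
- move/caseV=> [[-> Hv]|[-> Hv]|[-> Hv]|->]; last by rewrite mulr0 mem0v.
  + case/memv_addP: Hv => v1 Hv1 [v2 Hv2 ->].
    rewrite addr0 VmE mulrDr (zeropc ff ee ff ff Hu Hv2 ef) addr0.
    exact: (mulpc ff ee ee ee Hu Hv1).
  + rewrite addNr V0E -[u * v]add0r memv_add ?mem0v //.
    exact: (mulpc ff ee ee ff Hu Hv).
  + by rewrite (zeropc ff ee ff ee Hu Hv ef) mem0v.
Qed.

End S.

Lemma idealpc (k : fieldType) (A : falgType k) (c : A) :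
  c * c = c -> (forall a, c * a = a * c) -> is_ideal (pc c c).
Proof.
move=> cc ce a x /memPc-/(_ cc cc) Hx.
have ex : c * x = x by rewrite -Hx !mulrA cc.
have xe : x * c = x by rewrite -Hx -mulrA cc.
split; apply/memPc => //.
  by rewrite -mulrA -(mulrA a) xe ce -mulrA xe.
by rewrite mulrA ex -mulrA -ce mulrA xe.
Qed.

Lemma core (k : fieldType) (A : falgType k) (e : A) :
  connected_alg A -> ~ has_nontrivial_grading A -> e * e = e -> e != 0 -> e != 1 -> False.
Proof.
move=> conn ngr ee e0 e1.
set f := 1 - e.
have ff : f * f = f by rewrite /f mulrBl !mulrBr !mul1r !mulr1 ee subrr subr0.
have ef : e * f = 0 by rewrite /f mulrBr mulr1 ee subrr.
have fe : f * e = 0 by rewrite /f mulrBl mul1r ee subrr.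
have efs : e + f = 1 by rewrite /f addrC subrK.
have f0 : f != 0 by rewrite /f subr_eq0 eq_sym.
have fdef : f = 1 - e by [].
clearbody f.
have [Hef|Hef] := eqVneq (pc e f) 0%VS; last first.
  by apply: ngr; exists (V e f); split; [exact: grV|exists 1; rewrite V1E].
have [Hfe|Hfe] := eqVneq (pc f e) 0%VS; last first.
  by apply: ngr; exists (V e f); split; [exact: grV|exists (-1); rewrite VmE].
have eaf a : e * a * f = 0 by apply/eqP; rewrite -memv0 -Hef inpc.
have fae a : f * a * e = 0 by apply/eqP; rewrite -memv0 -Hfe inpc.
have ce a : e * a = a * e.
  have -> : e * a = e * a * e by rewrite -{1}[e * a]mulr1 -efs mulrDr eaf addr0.
  by rewrite -[a * e]mul1r mulrA -efs !mulrDl fae addr0.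
have cf a : f * a = a * f by rewrite fdef mulrBl mulrBr mul1r mulr1 ce.
have := conn (pc e e) (pc f f) (idealpc ee ce) (idealpc ff cf).
case.
- apply/vspaceP => x; rewrite memvf.
  rewrite [x](decomp efs) eaf fae addr0 add0r.
  by rewrite memv_add ?inpc.
- apply/eqP; rewrite -subv0; apply/subvP => x /memv_capP[/memPc-/(_ ee ee) H1 /memPc-/(_ ff ff) H2].
  by rewrite memv0 -H1 -H2 !mulrA ef !mul0r.
- by move=> I0; have := inpc e ee ee; rewrite I0 memv0 !ee (negPf e0).
- by move=> J0; have := inpc f ff ff; rewrite J0 memv0 !ff (negPf f0).
Qed.

Theorem mainTheorem2 (k : closedFieldType) (A : falgType k) :
  connected_alg A -> basic_alg A -> ~ has_nontrivial_grading A ->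
  quiver_num_vertices A 1.
Proof.
move=> conn _ ngr; split.
  exists [:: 1]; split => //; split.
  - case => // _ /=; split; first exact: mulr1.
    split; first exact: oner_neq0.
    move=> e1 e2 i1 i2 o12 o21 H.
    have [->|n0] := eqVneq e1 0; first by left.
    have [E1|n1] := eqVneq e1 1.
      by right; move: H; rewrite /= E1 => H; apply: (@addrI _ 1); rewrite addr0.
    by case: (core conn ngr i1 n0 n1).
  - by case=> [|i] [|j].
  - by rewrite big_seq1.
move=> s [prim orth sum1].
case: s prim orth sum1 => [|e0 [|e1 r]] prim orth sum1 //.
  by move: sum1; rewrite big_nil => /eqP; rewrite eq_sym oner_eq0.
have [i0 [n0 _]] := prim 0%N isT.
have [_ [n1 _]] := prim 1%N isT.
have o10 := orth 1%N 0%N isT isT isT.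
have ne1 : e0 != 1.
  by apply/eqP => E; move: n1; rewrite /= -[e1]mulr1 -E o10 eqxx.
by case: (core conn ngr i0 n0 ne1).
Qed.
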